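(* Suppose $f^{cl}_{\pi_\star}$ is $\delta$-ISS (for all perturbations, i.e. $\eta=\infty$) with linear gain $\gamma(x)=\gamma x$, $\gamma>0$. Fix a policy $\pi$ and $\xi\in\mathcal X$, assume $\pi,\pi_\star$ are continuously differentiable with $\|\bar\pi(x)-\bar\pi(x_0)-\partial_x\bar\pi(x_0)(x-x_0)\|\le\frac{L_{\partial\pi}}{2}\|x-x_0\|^2$ for all $x,x_0$ and $\bar\pi\in\{\pi,\pi_\star\}$, and assume $\gamma L_{\partial\pi}\ge1$. If \[\max_{0\le t\le T-1}\|\partial_x\Delta_t^{\pi_\star}(\xi;\pi)\|\le\frac1{4\gamma},\qquad\max_{0\le t\le T-1}\|\Delta_t^{\pi_\star}(\xi;\pi)\|\le\frac1{16\gamma^2L_{\partial\pi}},\] then for all $1\le t\le T$, $\|x_t^{\pi_\star}(\xi)-x_t^\pi(\xi)\|\le\max_{0\le k\le t-1}8\gamma\|\Delta_k^{\pi_\star}(\xi;\pi)\|$.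
   Context: Dynamics $x_{t+1}=f(x_t,u_t)$, $x_0=\xi$. For a policy $\pi$, $f^{cl}_\pi(x,\Delta):=f(x,\pi(x)+\Delta)$; $x_t^\pi(\xi,\{\Delta_s\})$ is the state at time $t$, $x_t^\pi(\xi):=x_t^\pi(\xi,\{0\})$; initial conditions in compact $\mathcal X$. $f^{cl}_{\pi_\star}$ is $\delta$-ISS with gain $\gamma(\cdot)$ if there is a class $\mathcal{KL}$ function $\beta$ with $\|x_t^{\pi_\star}(\xi_1;\{\Delta_s\}_{s=0}^{t-1})-x_t^{\pi_\star}(\xi_2;\{0\})\|\le\beta(\|\xi_1-\xi_2\|,t)+\gamma(\max_{0\le k\le t-1}\|\Delta_k\|)$ for all $\xi_1,\xi_2\in\mathcal X$, all $t$ and all perturbation sequences. $\Delta_t^{\pi_\star}(\xi;\pi):=\pi(x_t^{\pi_\star}(\xi))-\pi_\star(x_t^{\pi_\star}(\xi))$ and $\partial_x\Delta_t^{\pi_\star}(\xi;\pi):=\partial_x\pi(x_t^{\pi_\star}(\xi))-\partial_x\pi_\star(x_t^{\pi_\star}(\xi))$; norms are Euclidean/operator norms. *)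

(* Defs.v *)
From HB Require Import structures.
From mathcomp Require Import all_boot all_order all_algebra.
From mathcomp Require Import all_classical all_reals all_analysis.
Set Implicit Arguments. Unset Strict Implicit. Unset Printing Implicit Defensive.
Import Order.TTheory GRing.Theory Num.Theory numFieldNormedType.Exports.
Local Open Scope classical_set_scope.
Local Open Scope ring_scope.

Section Defs.
Variable R : realType.

Definition enorm (k : nat) (v : 'rV[R]_k) : R :=
  Num.sqrt (\sum_(i < k) v ord0 i ^+ 2).

Definition opnorm (n m : nat) (L : 'rV[R]_n -> 'rV[R]_m) : R :=
  sup [set enorm (L v) | v in [set v | enorm v <= 1]].

(* max_{0 <= k <= t-1} a k  (= 0 when t = 0) *)
Definition maxupto (a : nat -> R) (t : nat) : R := \big[Num.max/0]_(k < t) a k.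

Fixpoint traj (n m : nat) (f : 'rV[R]_n -> 'rV[R]_m -> 'rV[R]_n)
  (pi : 'rV[R]_n -> 'rV[R]_m) (xi : 'rV[R]_n) (Delta : nat -> 'rV[R]_m) (t : nat)
  : 'rV[R]_n :=
  match t with
  | 0 => xi
  | t'.+1 => let x := traj f pi xi Delta t' in f x (pi x + Delta t')
  end.

Definition classK (a : R -> R) : Prop :=
  a 0 = 0 /\ {within `[0, +oo[, continuous a} /\
  (forall r s, 0 <= r -> r < s -> a r < a s).

Definition classKL (beta : R -> nat -> R) : Prop :=
  (forall t, classK (fun r => beta r t)) /\
  (forall r, 0 <= r -> forall t s, (t <= s)%N -> beta r s <= beta r t) /\
  (forall r, 0 <= r -> (fun t => beta r t) @ \oo --> (0 : R)).

Definition deltaISS (n m : nat) (f : 'rV[R]_n -> 'rV[R]_m -> 'rV[R]_n)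
  (pi : 'rV[R]_n -> 'rV[R]_m) (X : set 'rV[R]_n) (gain : R -> R) : Prop :=
  exists beta, classKL beta /\
  forall xi1 xi2, X xi1 -> X xi2 -> forall (Delta : nat -> 'rV[R]_m) (t : nat),
    enorm (traj f pi xi1 Delta t - traj f pi xi2 (fun _ => 0) t)
      <= beta (enorm (xi1 - xi2)) t + gain (maxupto (fun k => enorm (Delta k)) t).

End Defs.

(* Main.v *)
Require Import Defs.
From HB Require Import structures.
From mathcomp Require Import all_boot all_order all_algebra.
From mathcomp Require Import all_classical all_reals all_analysis.
From mathcomp Require Import ring lra.
Import Order.TTheory GRing.Theory Num.Theory numFieldNormedType.Exports.
Local Open Scope classical_set_scope.
Local Open Scope ring_scope.

Section Enorm.
Variable R : realType.

Lemma enorm_ge0 k (v : 'rV[R]_k) : 0 <= enorm v.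
Proof. exact: sqrtr_ge0. Qed.

Lemma enorm0 k : enorm (0 : 'rV[R]_k) = 0.
Proof.
rewrite /enorm (eq_bigr (fun _ => 0)) ?big1 ?sqrtr0 // => i _.
by rewrite mxE expr0n.
Qed.

Lemma enormZ k (c : R) (v : 'rV[R]_k) : enorm (c *: v) = `|c| * enorm v.
Proof.
rewrite /enorm (eq_bigr (fun i => c ^+ 2 * v ord0 i ^+ 2)); last first.
  by move=> i _; rewrite mxE exprMn.
by rewrite -mulr_sumr sqrtrM ?sqr_ge0 // sqrtr_sqr.
Qed.

Lemma enormN k (v : 'rV[R]_k) : enorm (- v) = enorm v.
Proof. by rewrite -scaleN1r enormZ normrN normr1 mul1r. Qed.

Lemma enormB k (u v : 'rV[R]_k) : enorm (u - v) = enorm (v - u).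
Proof. by rewrite -enormN opprB. Qed.

Lemma enorm_coord k (v : 'rV[R]_k) i : `|v ord0 i| <= enorm v.
Proof.
rewrite -sqrtr_sqr /enorm ler_sqrt; last by rewrite sumr_ge0 // => j _; rewrite sqr_ge0.
rewrite (bigD1 i) //= lerDl sumr_ge0 // => j _; exact: sqr_ge0.
Qed.

Lemma cs_aux k (a b : 'I_k -> R) :
  \sum_i a i * b i <= Num.sqrt (\sum_i a i ^+ 2) * Num.sqrt (\sum_i b i ^+ 2).
Proof.
set A := \sum_i a i ^+ 2; set C := \sum_i b i ^+ 2.
have A0 : 0 <= A by rewrite sumr_ge0 // => i _; rewrite sqr_ge0.
have C0 : 0 <= C by rewrite sumr_ge0 // => i _; rewrite sqr_ge0.
have [sA|] := eqVneq (Num.sqrt A) 0.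
  have : A = 0 by move: sA => /eqP; rewrite sqrtr_eq0 => H; apply/eqP; rewrite eq_le H A0.
  move=> /psumr_eq0P H.
  rewrite sA mul0r big1 // => i _.
  have /eqP : a i ^+ 2 = 0 by apply: H => // j _; rewrite sqr_ge0.
  by rewrite sqrf_eq0 => /eqP ->; rewrite mul0r.
have [sC|] := eqVneq (Num.sqrt C) 0.
  have : C = 0 by move: sC => /eqP; rewrite sqrtr_eq0 => H; apply/eqP; rewrite eq_le H C0.
  move=> /psumr_eq0P H.
  rewrite sC mulr0 big1 // => i _.
  have /eqP : b i ^+ 2 = 0 by apply: H => // j _; rewrite sqr_ge0.
  by rewrite sqrf_eq0 => /eqP ->; rewrite mulr0.
move=> nC nA.
set sa := Num.sqrt A; set sc := Num.sqrt C.
have sa0 : 0 < sa by rewrite lt_def nA sqrtr_ge0.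
have sc0 : 0 < sc by rewrite lt_def nC sqrtr_ge0.
have saA : sa ^+ 2 = A by rewrite sqr_sqrtr.
have scC : sc ^+ 2 = C by rewrite sqr_sqrtr.
have key : \sum_i 2 * sa * sc * (a i * b i) <= \sum_i (a i ^+ 2 * sc ^+ 2 + b i ^+ 2 * sa ^+ 2).
  apply: ler_sum => i _.
  have := sqr_ge0 (a i * sc - b i * sa); nra.
rewrite -mulr_sumr big_split /= -!mulr_suml scC saA -saA -scC in key.
have p : 0 < 2 * sa * sc by rewrite !mulr_gt0.
rewrite -(ler_pM2l p); apply: (le_trans key); rewrite -/A -/C -saA -scC le_eqVlt; apply/orP; left; apply/eqP; ring.
Qed.

Lemma enormD k (u v : 'rV[R]_k) : enorm (u + v) <= enorm u + enorm v.
Proof.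
have -> : enorm u + enorm v = Num.sqrt ((enorm u + enorm v) ^+ 2).
  by rewrite sqrtr_sqr ger0_norm // addr_ge0 // enorm_ge0.
rewrite [X in X <= _]/enorm ler_sqrt; last by rewrite sqr_ge0.
rewrite /enorm.
rewrite (eq_bigr (fun i => u ord0 i ^+ 2 + v ord0 i ^+ 2 + 2 * (u ord0 i * v ord0 i))); last first.
  by move=> i _; rewrite mxE; ring.
rewrite !big_split /= -mulr_sumr.
have := cs_aux _ (fun i => u ord0 i) (fun i => v ord0 i).
have S1 : 0 <= \sum_i u ord0 i ^+ 2 by rewrite sumr_ge0 // => i _; rewrite sqr_ge0.
have S2 : 0 <= \sum_i v ord0 i ^+ 2 by rewrite sumr_ge0 // => i _; rewrite sqr_ge0.
rewrite sqrrD !sqr_sqrtr //.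
lra.
Qed.

End Enorm.

Section Op.
Variable R : realType.

Lemma enorm_sum k (I : finType) (F : I -> 'rV[R]_k) :
  enorm (\sum_i F i) <= \sum_i enorm (F i).
Proof.
elim/big_rec2: _ => [|i y1 y2 _ H]; first by rewrite enorm0.
apply: le_trans; first exact: enormD.
by rewrite lerD2l.
Qed.

Lemma opnorm_bound n m (L : 'rV[R]_n -> 'rV[R]_m) :
  (forall u v, L (u + v) = L u + L v) -> (forall (a : R) u, L (a *: u) = a *: L u) ->
  forall v, enorm (L v) <= opnorm L * enorm v.
Proof.
move=> LD LZ.
have L0 : L 0 = 0 by have := LZ 0 0; rewrite !scale0r.
set K := \sum_(j < n) enorm (L 'e_j).
have K0 : 0 <= K by rewrite sumr_ge0 // => j _; exact: enorm_ge0.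
have bnd : forall v, enorm (L v) <= K * enorm v.
  move=> v; rewrite {1}(row_sum_delta v).
  rewrite (big_morph L LD L0).
  apply: (le_trans (enorm_sum _ _ _)).
  rewrite /K mulr_suml; apply: ler_sum => j _.
  by rewrite LZ enormZ mulrC ler_wpM2l ?enorm_ge0 // enorm_coord.
set E := [set enorm (L v) | v in [set v | enorm v <= 1]].
have ubE : ubound E K.
  move=> _ [v /= v1 <-]; apply: (le_trans (bnd v)).
  by rewrite -[leRHS]mulr1 ler_wpM2l.
have supE : forall v, enorm v <= 1 -> enorm (L v) <= opnorm L.
  move=> v v1; apply: (ub_le_sup (ex_intro _ K ubE)); by exists v.
move=> v.
have [e0|en0] := eqVneq (enorm v) 0.
  rewrite e0 mulr0; have := bnd v; by rewrite e0 mulr0.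
have ep : 0 < enorm v by rewrite lt_def en0 enorm_ge0.
have := supE ((enorm v)^-1 *: v).
rewrite enormZ LZ enormZ ger0_norm ?invr_ge0 ?enorm_ge0 // mulVf // lexx.
move=> /(_ isT) H.
by rewrite -ler_pdivrMr // mulrC.
Qed.

Lemma maxr_ge0' (x y : R) : 0 <= x -> 0 <= Num.max x y.
Proof. by move=> x0; rewrite le_max x0. Qed.

Lemma maxr_le' (x y c : R) : x <= c -> y <= c -> Num.max x y <= c.
Proof. by move=> xc yc; rewrite ge_max xc yc. Qed.

Lemma mx_ge0 (a : nat -> R) t : 0 <= maxupto a t.
Proof. exact: bigmax_ge_id. Qed.

Lemma mx_ub (a : nat -> R) t k : (k < t)%N -> a k <= maxupto a t.
Proof.
move=> kt; exact: (le_bigmax 0 (fun i : 'I_t => a i) (Ordinal kt)).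
Qed.

Lemma mx_le (a : nat -> R) t c : 0 <= c -> (forall k, (k < t)%N -> a k <= c) ->
  maxupto a t <= c.
Proof.
move=> c0 H; apply: (big_ind (fun x : R => x <= c)) => // [x y|i _]; first exact: maxr_le'.
exact: H.
Qed.

Lemma mx_mono (a : nat -> R) s t : (s <= t)%N -> maxupto a s <= maxupto a t.
Proof.
move=> st; apply: mx_le; first exact: mx_ge0.
by move=> k ks; apply: mx_ub; exact: leq_trans ks st.
Qed.

Lemma mx_scale (a : nat -> R) c t : 0 <= c ->
  maxupto (fun k => c * a k) t = c * maxupto a t.
Proof.
move=> c0; rewrite /maxupto.
by rewrite (big_morph (fun x => c * x) (fun x y => maxr_pMr x y c0) (mulr0 c)).
Qed.

End Op.

Lemma zid (V : zmodType) (a b c d p q : V) :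
  a - b = (c - d) + (a - c - p) - (b - d - q) + (p - q).
Proof.
rewrite !opprB !addrA.
rewrite [RHS](ACl (((((3*8)*(1*4))*(2*7))*(5*9))*(6*10))) /=.
by rewrite !subrr addNr addNr !addr0.
Qed.

Lemma zlem (V : zmodType) (a b c d : V) : (a + b) - (c + d) = (a - c) + (b - d).
Proof. by rewrite opprD addrACA. Qed.

Lemma opnorm_d (R : realType) n m (g h : 'rV[R]_n -> 'rV[R]_m) x v :
  enorm ('d g x v - 'd h x v) <= opnorm (fun v => 'd g x v - 'd h x v) * enorm v.
Proof.
have LD : forall u w : 'rV[R]_n, 'd g x (u + w) - 'd h x (u + w) =
  'd g x u - 'd h x u + ('d g x w - 'd h x w).
  move=> u w.
  transitivity (('d g x u + 'd g x w) - ('d h x u + 'd h x w)); last exact: zlem.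
  by congr (_ - _); exact: linearD.
have LZ : forall (a : R) (u : 'rV[R]_n), 'd g x (a *: u) - 'd h x (a *: u) = a *: ('d g x u - 'd h x u).
  move=> a u.
  transitivity (a *: 'd g x u - a *: 'd h x u); last exact: (esym (scalerBr _ _ _)).
  by congr (_ - _); exact: linearZ.
exact: (@opnorm_bound R n m (fun w => 'd g x w - 'd h x w) LD LZ v).
Qed.

Lemma A1 (R : realType) (D r1 r2 dd L e d0 : R) : r1 <= L / 2 * e ^+ 2 -> r2 <= L / 2 * e ^+ 2 ->
  dd <= d0 * e -> D + r1 + r2 + dd <= D + d0 * e + L * e ^+ 2.
Proof. move=> *; lra. Qed.

Lemma A2 (R : realType) (g M x : R) : 0 < g -> 0 <= M -> x <= 7 * M -> g * x <= 8 * g * M.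
Proof. move=> *; nra. Qed.

Lemma A3 (R : realType) (Dp D t u M : R) : D <= M -> t <= 2 * M -> u <= 4 * M ->
  Dp <= D + t + u -> Dp <= 7 * M.
Proof. move=> *; lra. Qed.

Theorem mainTheorem5 (R : realType) (n m : nat)
  (f : 'rV[R]_n -> 'rV[R]_m -> 'rV[R]_n) (X : set 'rV[R]_n)
  (pistar pi : 'rV[R]_n -> 'rV[R]_m) (gamma Ldpi : R) (xi : 'rV[R]_n) (T : nat) :
  compact X ->
  0 < gamma ->
  deltaISS f pistar X (fun r => gamma * r) ->
  X xi ->
  (* pi and pistar are continuously differentiable *)
  (forall x, differentiable pi x) -> (forall x, differentiable pistar x) ->
  (forall v, continuous (fun x => 'd pi x v)) ->
  (forall v, continuous (fun x => 'd pistar x v)) ->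
  (* quadratic Taylor remainder bound *)
  (forall x x0, enorm (pi x - pi x0 - 'd pi x0 (x - x0))
                  <= Ldpi / 2 * enorm (x - x0) ^+ 2) ->
  (forall x x0, enorm (pistar x - pistar x0 - 'd pistar x0 (x - x0))
                  <= Ldpi / 2 * enorm (x - x0) ^+ 2) ->
  1 <= gamma * Ldpi ->
  let xs := fun t => traj f pistar xi (fun _ => 0) t in
  let Dl := fun t => pi (xs t) - pistar (xs t) in
  let dDl := fun t => opnorm (fun v => 'd pi (xs t) v - 'd pistar (xs t) v) in
  maxupto dDl T <= 1 / (4 * gamma) ->
  maxupto (fun t => enorm (Dl t)) T <= 1 / (16 * gamma ^+ 2 * Ldpi) ->
  forall t, (1 <= t <= T)%N ->
    enorm (xs t - traj f pi xi (fun _ => 0) t)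
      <= maxupto (fun k => 8 * gamma * enorm (Dl k)) t.
Proof.
move=> _ g0 [beta [KLb ISS]] Xxi _ _ _ _ Tpi Tps gL xs Dl dDl HdD HDl t /andP[_ tT].
have L0 : 0 < Ldpi.
  have : 0 < gamma * Ldpi by apply: lt_le_trans gL; exact: ltr01.
  by rewrite pmulr_rgt0.
set xp := fun t => traj f pi xi (fun _ => 0) t.
set Dp := fun k => pi (xp k) - pistar (xp k).
have trajE : forall s, traj f pistar xi Dp s = xp s.
  elim => [//|s IH] /=; rewrite IH; congr (f _ _).
  by rewrite /Dp addr0 addrC subrK.
have beta0 : forall s, beta 0 s = 0.
  by move=> s; case: KLb => /(_ s) [-> _] _.
have iss : forall s, enorm (xs s - xp s) <= gamma * maxupto (fun k => enorm (Dp k)) s.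
  move=> s; have := ISS xi xi Xxi Xxi Dp s.
  by rewrite trajE subrr enorm0 beta0 add0r enormB.
have step : forall k, enorm (Dp k) <= enorm (Dl k) + dDl k * enorm (xs k - xp k)
    + Ldpi * enorm (xs k - xp k) ^+ 2.
  move=> k.
  have -> : Dp k = Dl k + (pi (xp k) - pi (xs k) - 'd pi (xs k) (xp k - xs k))
     - (pistar (xp k) - pistar (xs k) - 'd pistar (xs k) (xp k - xs k))
     + ('d pi (xs k) (xp k - xs k) - 'd pistar (xs k) (xp k - xs k)) by exact: zid.
  have H1 := Tpi (xp k) (xs k).
  have H2 := Tps (xp k) (xs k).
  have H3' := opnorm_d _ _ _ pi pistar (xs k) (xp k - xs k).

  rewrite (enormB _ _ (xs k)) /dDl.
  apply: le_trans; first exact: enormD.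
  apply: le_trans; first (apply: lerD; [exact: enormD| exact: lexx]).
  apply: le_trans; first (apply: lerD; [apply: lerD; [exact: enormD| exact: lexx]| exact: lexx]).
  rewrite enormN.
  exact: A1 H1 H2 H3'.
set M := fun s => maxupto (fun k => enorm (Dl k)) s.
have M0 : forall s, 0 <= M s by move=> s; exact: mx_ge0.
have MT : forall s, (s <= T)%N -> M s <= 1 / (16 * gamma ^+ 2 * Ldpi).
  by move=> s sT; apply: le_trans HDl; exact: mx_mono.
have P0 : 0 < 16 * gamma ^+ 2 * Ldpi by rewrite !mulr_gt0 // exprn_gt0.
have main : forall s, (s <= T)%N -> enorm (xs s - xp s) <= 8 * gamma * M s.
  elim/ltn_ind => s IH sT.
  apply: le_trans (iss s) _.
  suff : maxupto (fun k => enorm (Dp k)) s <= 7 * M s.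
    move=> ?; apply: A2 => //; exact: M0.
  apply: mx_le; first by rewrite mulr_ge0 // M0.
  move=> k ks.
  have kT : (k < T)%N by exact: leq_trans ks sT.
  set ek := enorm (xs k - xp k).
  have ek0 : 0 <= ek by exact: enorm_ge0.
  have ekb : ek <= 8 * gamma * M s.
    apply: le_trans (IH k ks (ltnW kT)) _.
    apply: ler_wpM2l; first by rewrite mulr_ge0 // ltW.
    exact: mx_mono (ltnW ks).
  have Dlb : enorm (Dl k) <= M s by exact: mx_ub.
  have dDb : dDl k <= 1 / (4 * gamma) by apply: le_trans HdD; exact: mx_ub.
  have t1 : dDl k * ek <= 2 * M s.
    apply: (le_trans (ler_wpM2r ek0 dDb)).
    apply: (le_trans (ler_wpM2l _ ekb)); first by rewrite divr_ge0 // mulr_ge0 // ltW.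
    rewrite le_eqVlt; apply/orP; left; apply/eqP; field.
    by rewrite gt_eqF.
  have PM : 16 * gamma ^+ 2 * Ldpi * M s <= 1.
    by have := ler_wpM2l (ltW P0) (MT s sT); rewrite mul1r mulfV ?gt_eqF.
  have t2 : Ldpi * ek ^+ 2 <= 4 * M s.
    have e2 : ek ^+ 2 <= (8 * gamma * M s) ^+ 2.
      by rewrite ler_pXn2r // ?nnegrE // mulr_ge0 // ?mulr_ge0 // ?ltW // M0.
    apply: (le_trans (ler_wpM2l (ltW L0) e2)).
    have -> : Ldpi * (8 * gamma * M s) ^+ 2 = 4 * M s * (16 * gamma ^+ 2 * Ldpi * M s).
      by ring.
    by rewrite -[leRHS]mulr1 ler_wpM2l // mulr_ge0 // M0.
  have := step k; rewrite -/ek; exact: A3 Dlb t1 t2.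
have := main t tT.
by rewrite mx_scale // mulr_ge0 // ltW.
Qed.
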